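(* Let $q$ be a query with sensitivity $\Delta q>0$ and let $b>0$ be a random scale parameter with $M_{1/b}(t)=\mathbb E[e^{t/b}]$. Consider the R$^2$DP Laplace mechanism $\mathcal M_q(d,b)=q(d)+\mathrm{Lap}(b)$. For every $\epsilon\ge \ln\big[\mathbb E_{1/b}(e^{\epsilon(b)})\big]=\ln M_{1/b}(\Delta q)$, where $\epsilon(b)=\Delta q/b$, and every $\gamma\ge0$, the usefulness of the R$^2$DP mechanism is at most that of the $\epsilon$-differentially private Laplace mechanism with scale $\Delta q/\epsilon$: $$\mathbb P(|\mathcal M_q(d,b)-q(d)|\le\gamma)=1-M_{1/b}(-\gamma)\ \le\ 1-e^{-\gamma\epsilon/\Delta q}.$$ Equivalently, for an R$^2$DP mechanism to improve on the usefulness of the baseline Laplace mechanism with the same privacy level, it is necessary that $$e^{\epsilon}=\frac{\mathbb E(1/b)}{M'_{1/b}(-\Delta q)}<M_{1/b}(\Delta q).$$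
   Context: $\mathrm{Lap}(b)$ is the zero-mean Laplace distribution with density $\frac{1}{2b}e^{-|x|/b}$. In an R$^2$DP Laplace mechanism the scale $b$ is random (independent of the data) and, conditionally on $b$, $\mathrm{Lap}(b)$ noise is added to $q(d)$. $\Delta q=\max|q(d)-q(d')|$ over datasets differing in one individual's data. The baseline Laplace mechanism with scale $\Delta q/\epsilon$ is $\epsilon$-differentially private and has usefulness $1-e^{-\gamma\epsilon/\Delta q}$ at error bound $\gamma$. The quantity $\mathbb E(1/b)/M'_{1/b}(-\Delta q)$ is $e^\epsilon$ for the differential-privacy level $\epsilon$ guaranteed for the R$^2$DP Laplace mechanism, where $M'_{1/b}(t)=\mathbb E[\frac1b e^{t/b}]$. *)

(* Defs.v *)
From HB Require Import structures.
From mathcomp Require Import all_boot all_order all_algebra.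
From mathcomp Require Import all_classical all_reals all_analysis.
Set Implicit Arguments. Unset Strict Implicit. Unset Printing Implicit Defensive.
Import Order.TTheory GRing.Theory Num.Theory.
Local Open Scope ring_scope.
Local Open Scope classical_set_scope.

Definition laplace_pdf (R : realType) (s x : R) : R :=
  (2 * s)^-1 * expR (- `|x| / s).

Definition mgf_inv (d : measure_display) (T : measurableType d) (R : realType)
  (P : probability T R) (b : T -> R) (t : R) : \bar R :=
  (\int[P]_w (expR (t / b w))%:E)%E.

(* Usefulness of the R^2DP Laplace mechanism at error bound g:
   P(|M_q(d,b) - q(d)| <= g) where, conditionally on b, the noise
   M_q(d,b) - q(d) is Lap(b); i.e. the mixture
   E_b[ integral_{[-g,g]} laplace_pdf b x dx ]. *)
Definition r2dp_usefulness (d : measure_display) (T : measurableType d)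
  (R : realType) (P : probability T R) (b : T -> R) (g : R) : \bar R :=
  (\int[P]_w (\int[@lebesgue_measure R]_(x in `[(- g)%R, g]) (laplace_pdf (b w) x)%:E))%E.

(* Main.v *)
Require Import Defs.
From HB Require Import structures.
From mathcomp Require Import all_boot all_order all_algebra.
From mathcomp Require Import all_classical all_reals all_analysis.
Import Order.TTheory GRing.Theory Num.Theory.
Local Open Scope ring_scope.
Local Open Scope classical_set_scope.

From mathcomp Require Import ring lra measurable_realfun.
Import numFieldTopology.Exports.

Section S.

Context {R : realType}.

Lemma cont_kexp (k c : R) : continuous (fun y : R => k * expR (c * y)).
Proof.
move=> x.
apply: (@continuousM _ R^o (fun=> k) (fun x => expR (c * x))).
  exact: cst_continuous.
apply: continuous_comp; last exact: continuous_expR.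
by apply: continuousM => //; exact: cst_continuous.
Qed.

Lemma F_derive (k c x : R) : c != 0 ->
  is_derive x 1 (fun y : R => k / c * expR (c * y)) (k * expR (c * x)).
Proof.
move=> c0.
have h1 : is_derive x 1 (fun y : R => c * y) c.
  have := is_deriveZ c (is_derive_id x 1).
  have -> : c \*: id = (fun y : R => c * y) by apply/funext.
  by rewrite /GRing.scale /= mulr1.
have h2 : is_derive x 1 (expR \o (fun y : R => c * y)) (expR (c * x) * c).
  exact: is_derive1_comp.
have := is_deriveZ (k / c) h2.
have -> : (k / c) \*: (expR \o (fun y : R => c * y)) = (fun y : R => k / c * expR (c * y)) by apply/funext.
move=> H; apply: (is_derive_eq H).
rewrite /GRing.scale /=. by field.
Qed.

Lemma int_kexp (k c a b : R) : c != 0 -> a < b ->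
  (\int[lebesgue_measure]_(x in `[a, b]) (k * expR (c * x))%:E =
   ((k / c) * (expR (c * b) - expR (c * a)))%:E)%E.
Proof.
move=> c0 ab.
rewrite mulrBr EFinB.
apply: (@continuous_FTC2 _ _ (fun y : R => k / c * expR (c * y))) => //.
- exact/continuous_subspaceT/cont_kexp.
- have cF : continuous (fun y : R => k / c * expR (c * y)) by exact: cont_kexp.
  split.
  + by move=> z _; have [] := F_derive k c z c0.
  + exact/cvg_at_right_filter/cF.
  + exact/cvg_at_left_filter/cF.
- move=> z _; rewrite derive1E. exact: (@derive_val _ _ _ _ _ _ _ (F_derive k c z c0)).
Qed.

Lemma measurable_laplace (s : R) : measurable_fun setT (laplace_pdf s).
Proof.
rewrite /laplace_pdf.
apply: measurable_funM => //.
apply: measurableT_comp => //.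
apply: measurable_funM => //.
apply: measurableT_comp => //.
Qed.

Lemma lap_int (s g : R) : 0 < s -> 0 <= g ->
  (\int[lebesgue_measure]_(x in `[(- g)%R, g]) (laplace_pdf s x)%:E =
   (1 - expR (- g / s))%R%:E)%E.
Proof.
move=> s0; rewrite le_eqVlt => /predU1P[<-|g0].
  by rewrite oppr0 set_itv1 integral_set1 mul0r expR0 subrr.
have mf : forall A, measurable_fun A (EFin \o laplace_pdf s).
  move=> A; apply: measurable_funTS; apply/measurable_EFinP.
  exact: measurable_laplace.
rewrite (@itv_bndbnd_setU _ _ _ (BRight 0)); last 2 first.
- by rewrite bnd_simp oppr_le0 ltW.
- by rewrite bnd_simp ltW.
rewrite integral_setU //; first last.
  apply/disj_setPS => x [] /=; rewrite !in_itv /= => /andP[_ x0] /andP[x0' _].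
  by move: (lt_le_trans x0' x0); rewrite ltxx.
  by apply: measurable_funTS; apply/measurable_EFinP; exact: measurable_laplace.
rewrite integral_itv_obnd_cbnd //.
have s0' : s^-1 != 0 by rewrite invr_eq0 gt_eqF.
have -> : (\int[lebesgue_measure]_(x in `[(- g)%R, 0%R]) (laplace_pdf s x)%:E =
   \int[lebesgue_measure]_(x in `[(- g)%R, 0%R]) ((2 * s)^-1 * expR (s^-1 * x))%:E)%E.
  apply: eq_integral => x; rewrite inE /= in_itv /= => /andP[_ x0].
  by rewrite /laplace_pdf ler0_norm // opprK; congr ((_ * expR _)%:E); exact: mulrC.
have -> : (\int[lebesgue_measure]_(x in `[0%R, g]) (laplace_pdf s x)%:E =
   \int[lebesgue_measure]_(x in `[0%R, g]) ((2 * s)^-1 * expR (- s^-1 * x))%:E)%E.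
  apply: eq_integral => x; rewrite inE /= in_itv /= => /andP[x0 _].
  by rewrite /laplace_pdf ger0_norm // !mulNr [x / s]mulrC.
rewrite int_kexp // ?oppr_lt0 // int_kexp ?oppr_eq0 // ?ltr_oppl ?oppr0 //.
rewrite -EFinD; congr (_%:E).
rewrite !mulr0 expR0.
have -> : s^-1 * - g = - g / s by rewrite mulrC.
have -> : - s^-1 * g = - g / s by rewrite !mulNr mulrC.
set e := expR (- g / s). field. exact: lt0r_neq0.
Qed.

Lemma tangent (a y : R) : expR a * (1 + y - a) <= expR y.
Proof.
have -> : expR y = expR a * expR (y - a) by rewrite -expRD addrC subrK.
rewrite ler_pM2l ?expR_gt0 // -addrA; exact: expR_ge1Dx.
Qed.
End S.

Lemma int_bounded1 (d : measure_display) (T : measurableType d) (R : realType)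
  (P : probability T R) (f : T -> R) :
  measurable_fun setT f -> (forall w, `|f w| <= 1) ->
  P.-integrable setT (EFin \o f).
Proof.
move=> mf fb.
apply: (@le_integrable _ _ _ P setT measurableT _ (EFin \o cst 1%R)) => //.
- exact/measurable_EFinP.
- by move=> w _ /=; rewrite lee_fin normr1.
- exact: finite_measure_integrable_cst.
Qed.

Theorem theorem4p2 (d : measure_display) (T : measurableType d) (R : realType)
  (P : probability T R) (b : T -> R) (Dq : R)
  (b_meas : measurable_fun setT b) (b_pos : forall w, 0 < b w) (Dq_pos : 0 < Dq) :
  (* main claim *)
  (forall eps : R,
     mgf_inv P b Dq \is a fin_num -> ln (fine (mgf_inv P b Dq)) <= eps ->
     forall g : R, 0 <= g ->
       r2dp_usefulness P b g = (1 - mgf_inv P b (- g))%E /\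
       (r2dp_usefulness P b g <= (1 - expR (- (g * eps) / Dq))%:E)%E)
  /\
  (* equivalent form: improving on the baseline at level eps forces e^eps < M(Dq) *)
  (forall eps : R,
     (exists g : R, 0 <= g /\
        ((1 - expR (- (g * eps) / Dq))%:E < r2dp_usefulness P b g)%E) ->
     ((expR eps)%:E < mgf_inv P b Dq)%E).
Proof.
have mT : measurable (setT : set T) := measurableT.
have mbinv : measurable_fun setT (fun w => (b w)^-1).
  apply: (eq_measurable_fun (fun w => expR (- ln (b w)))).
    by move=> w _; rewrite expRN lnK // posrE b_pos.
  apply: measurableT_comp; first exact: measurable_expR.
  apply: measurableT_comp => //.
  apply: measurableT_comp => //; exact: measurable_ln.
have mexp : forall t, measurable_fun setT (fun w => expR (t / b w)).
  move=> t; apply: measurableT_comp; first exact: measurable_expR.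
  exact: measurable_funM.
have expneg1 : forall t w, t <= 0 -> `|expR (t / b w)| <= 1.
  move=> t w t0; rewrite ger0_norm ?expR_ge0 // -expR0 ler_expR.
  by rewrite mulr_le0_ge0 // invr_ge0 ltW.
have int_expneg : forall t, t <= 0 -> P.-integrable setT (EFin \o (fun w => expR (t / b w))).
  by move=> t t0; apply: int_bounded1 => // w; exact: expneg1.
have useE : forall g, 0 <= g ->
    r2dp_usefulness P b g = (1 - \int[P]_w expR (- g / b w))%:E /\
    mgf_inv P b (- g) = (\int[P]_w expR (- g / b w))%:E.
  move=> g g0.
  have ng0 : - g <= 0 by rewrite oppr_le0.
  have i1 := int_expneg _ ng0.
  have i2 : P.-integrable setT (EFin \o (fun w => 1 - expR (- g / b w))).
    apply: int_bounded1 => [|w].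
      by apply: measurable_funB => //; exact: mexp.
    have := expneg1 (- g) w ng0.
    have e0 := expR_ge0 (- g / b w).
    rewrite ger0_norm // => e1.
    rewrite ger0_norm ?subr_ge0 //; lra.
  split; last first.
    by rewrite /mgf_inv /Rintegral fineK //; exact: (integrable_fin_num mT i1).
  rewrite /r2dp_usefulness.
  rewrite (eq_integral (fun w => (1 - expR (- g / b w))%:E)); last first.
    by move=> w _; rewrite lap_int.
  rewrite -[LHS]fineK; last exact: (integrable_fin_num mT i2).
  congr (_%:E).
  rewrite -/(Rintegral P setT (fun w => 1 - expR (- g / b w))).
  rewrite RintegralB //; last exact: finite_measure_integrable_cst.
  have hP : fine (P setT) = 1 by rewrite (probability_setT P).
  by rewrite Rintegral_cst // hP mulr1.
have hP : fine (P setT) = 1 by rewrite (probability_setT P).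
have main1 : forall eps : R,
     mgf_inv P b Dq \is a fin_num -> ln (fine (mgf_inv P b Dq)) <= eps ->
     forall g : R, 0 <= g ->
       r2dp_usefulness P b g = (1 - mgf_inv P b (- g))%E /\
       (r2dp_usefulness P b g <= (1 - expR (- (g * eps) / Dq))%:E)%E.
  move=> eps Mfin Meps g g0.
  have [uE mE] := useE g g0.
  split; first by rewrite uE mE EFinB.
  rewrite uE lee_fin lerD2l lerN2.
  have intM : P.-integrable setT (EFin \o (fun w => expR (Dq / b w))).
    apply/integrableP; split; first by apply/measurable_EFinP; exact: mexp.
    rewrite (eq_integral (fun w => (expR (Dq / b w))%:E)); last first.
      by move=> w _; rewrite /= ger0_norm // expR_ge0.
    by rewrite -ge0_fin_numE ?integral_ge0 // => w _; rewrite lee_fin expR_ge0.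
  have intinv : P.-integrable setT (EFin \o (fun w => (b w)^-1)).
    apply: (@le_integrable _ _ _ P setT mT _ (fun w => (Dq^-1)%:E * (EFin \o (fun w => expR (Dq / b w))) w)%E).
    - exact/measurable_EFinP.
    - move=> w _ /=; rewrite lee_fin.
      have bw0 : 0 <= (b w)^-1 by rewrite invr_ge0 ltW.
      have Dq0 : 0 <= Dq^-1 by rewrite invr_ge0 ltW.
      rewrite (ger0_norm bw0) ger0_norm ?(mulr_ge0 Dq0 (expR_ge0 _)) //.
      have h := expR_ge1Dx (Dq / b w).
      rewrite -(ler_pM2l Dq_pos) mulrA mulfV ?gt_eqF // mul1r.
      change (Dq / b w <= expR (Dq / b w)); lra.
    - exact: integrableZl.
  set m := \int[P]_w (b w)^-1.
  have lower_aff : forall (f : T -> R) c1 c2,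
      P.-integrable setT (EFin \o f) ->
      (forall w, c1 + c2 * (b w)^-1 <= f w) ->
      c1 + c2 * m <= \int[P]_w f w.
    move=> f c1 c2 intf hf.
    have i3 : P.-integrable setT (EFin \o (fun w => c2 * (b w)^-1)).
      have H := integrableZl mT c2 intinv.
      apply: (eq_integrable mT _ _ _ H).
      by move=> w _ /=; rewrite EFinM.
    have i4 : P.-integrable setT (EFin \o (fun w => c1 + c2 * (b w)^-1)).
      have H := integrableD mT (finite_measure_integrable_cst P c1 mT) i3.
      apply: (eq_integrable mT _ _ _ H).
      by move=> w _ /=; rewrite EFinD.
    have -> : c1 + c2 * m = \int[P]_w (c1 + c2 * (b w)^-1).
      rewrite RintegralD //; last exact: finite_measure_integrable_cst.
      by rewrite Rintegral_cst // hP mulr1 RintegralZl.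
    exact: le_Rintegral.
  set RA := \int[P]_w expR (Dq / b w).
  have MA : mgf_inv P b Dq = RA%:E by rewrite /RA /Rintegral fineK.
  have hA : expR (Dq * m) <= RA.
    set a := Dq * m.
    have := lower_aff _ (expR a * (1 - a)) (expR a * Dq) intM.
    have -> : expR a * (1 - a) + expR a * Dq * m = expR a by rewrite /a; ring.
    apply => w.
    have -> : expR a * (1 - a) + expR a * Dq * (b w)^-1 = expR a * (1 + Dq / b w - a) by ring.
    exact: tangent.
  have hm : Dq * m <= eps.
    apply: le_trans Meps; rewrite MA /=.
    rewrite -[X in X <= _]expRK ler_ln // posrE ?expR_gt0 //.
    exact: lt_le_trans (expR_gt0 _) hA.
  have hB : expR (- g * m) <= \int[P]_w expR (- g / b w).
    set a := - g * m.
    have := lower_aff _ (expR a * (1 - a)) (expR a * (- g)) (int_expneg (- g) _).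
    have -> : expR a * (1 - a) + expR a * (- g) * m = expR a by rewrite /a; ring.
    apply; first by rewrite oppr_le0.
    move=> w.
    have -> : expR a * (1 - a) + expR a * (- g) * (b w)^-1 = expR a * (1 + - g / b w - a) by ring.
    exact: tangent.
  apply: le_trans hB; rewrite ler_expR mulNr mulNr lerN2.
  rewrite -mulrA; apply: (ler_wpM2l g0).
  by rewrite ler_pdivlMr // mulrC.
split; first exact: main1.
move=> eps [g [g0 hg]].
have M0 : (0 <= mgf_inv P b Dq)%E.
  by apply: integral_ge0 => w _; rewrite lee_fin expR_ge0.
have [Mfin|Minf] := boolP (mgf_inv P b Dq \is a fin_num); last first.
  move: Minf; rewrite ge0_fin_numE // -leNgt leye_eq => /eqP ->.
  exact: ltry.
rewrite ltNge; apply/negP => HM.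
have M1 : (1 <= mgf_inv P b Dq)%E.
  rewrite /mgf_inv.
  have -> : (1 = \int[P]_(w in setT) (cst 1 w))%E.
    by rewrite integral_cst // mul1e; apply/esym; apply: probability_setT.
  apply: (ge0_le_integral P mT).
  - by move=> w _; rewrite /= lee_fin.
  - exact: measurable_cst.
  - by apply/measurable_EFinP; exact: mexp.
  - move=> w _; rewrite lee_fin /= -expR0 ler_expR.
    by rewrite divr_ge0 ?ltW.
have hl : ln (fine (mgf_inv P b Dq)) <= eps.
  rewrite -[X in _ <= X]expRK ler_ln ?posrE ?expR_gt0 //.
  - by rewrite -lee_fin fineK.
  - by rewrite -lte_fin fineK // (lt_le_trans _ M1) // lte_fin.
have [_ H] := main1 eps Mfin hl g g0.
by move: (lt_le_trans hg H); rewrite ltxx.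
Qed.
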